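(* Let $\Phi$ be an irreducible reduced root system with basis $\Delta$, Weyl group $W$ with length function $l$, highest root $\tilde\alpha$. For every positive long root $\alpha$, $x_{-\alpha}=s_\alpha x_\alpha$ and $l(x_{-\alpha})=l(s_\alpha x_\alpha)=l(s_\alpha)+l(x_\alpha)$.
   Context: Long roots are those of maximal length for a $W$-invariant scalar product $(\cdot|\cdot)$. $\tilde I=\{\alpha\in\Delta:(\tilde\alpha|\alpha)=0\}$, $\Phi_{\tilde I}^+$ the positive roots in the span of $\tilde I$, $X_{\tilde I}=\{w\in W:w(\Phi^+_{\tilde I})\subset\Phi^+\}$; for a long root $\beta$, $x_\beta$ is the unique element of $X_{\tilde I}$ with $x_\beta(\tilde\alpha)=\beta$. *)

(* Defs.v *)
From Stdlib Require Import ClassicalDescription.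
From HB Require Import structures.
From mathcomp Require Import all_boot all_order all_algebra.
Set Implicit Arguments. Unset Strict Implicit. Unset Printing Implicit Defensive.
Import Order.TTheory GRing.Theory Num.Theory.
Local Open Scope ring_scope.

Section RootSystems.
Variables (R : realFieldType) (n : nat).
Notation vec := 'cV[R]_n.

Definition dotv (u v : vec) : R := \sum_(i < n) u i ord0 * v i ord0.

Definition refl_mx (a : vec) : 'M[R]_n :=
  1%:M - (2 / dotv a a) *: (a *m a^T).

(* Phi is a (finite, crystallographic) reduced root system spanning the space *)
Definition root_system (Phi : seq vec) : Prop :=
  [/\ uniq Phi /\ 0 \notin Phi,
      (forall v : vec, exists c : vec -> R, v = \sum_(b <- Phi) c b *: b),
      (forall a b, a \in Phi -> b \in Phi -> refl_mx a *m b \in Phi),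
      (forall a b, a \in Phi -> b \in Phi ->
         exists z : int, 2 * dotv b a / dotv a a = z%:~R) &
      (forall a (c : R), a \in Phi -> c *: a \in Phi -> c = 1 \/ c = -1)].

Definition irreducible_rs (Phi : seq vec) : Prop :=
  forall P : pred vec,
    (exists2 a, a \in Phi & P a) -> (exists2 b, b \in Phi & ~~ P b) ->
    exists a b, [/\ a \in Phi, b \in Phi, P a, ~~ P b & dotv a b != 0].

Definition nonneg_comb (Delta : seq vec) (v : vec) : Prop :=
  exists c : 'I_(size Delta) -> nat, v = \sum_(i < size Delta) (c i)%:R *: Delta`_i.

Definition is_basis (Phi Delta : seq vec) : Prop :=
  [/\ uniq Delta, {subset Delta <= Phi},
      (forall c : 'I_(size Delta) -> R,
          \sum_(i < size Delta) c i *: Delta`_i = 0 -> forall i, c i = 0) &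
      (forall b, b \in Phi -> nonneg_comb Delta b \/ nonneg_comb Delta (- b))].

Definition pos_root (Phi Delta : seq vec) (b : vec) : Prop :=
  b \in Phi /\ nonneg_comb Delta b.

Definition highest_root (Phi Delta : seq vec) (ah : vec) : Prop :=
  ah \in Phi /\ forall b, b \in Phi -> nonneg_comb Delta (ah - b).

Definition long_root (Phi : seq vec) (b : vec) : Prop :=
  b \in Phi /\ forall c, c \in Phi -> dotv c c <= dotv b b.

Definition word_mx (s : seq vec) : 'M[R]_n :=
  foldr (fun a M => refl_mx a *m M) 1%:M s.

Definition inW (Phi : seq vec) (w : 'M[R]_n) : Prop :=
  exists s : seq vec, all (mem Phi) s /\ w = word_mx s.

Definition has_word_of_size (Delta : seq vec) (w : 'M[R]_n) (k : nat) : bool :=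
  [exists t : k.-tuple 'I_(size Delta),
     word_mx (map (fun i : 'I_(size Delta) => Delta`_i) t) == w].

Definition lengthW (Delta : seq vec) (w : 'M[R]_n) : nat :=
  match excluded_middle_informative (exists k, has_word_of_size Delta w k) with
  | left h => ex_minn h
  | right _ => 0%N
  end.

Definition Itilde (Delta : seq vec) (ah : vec) : pred vec :=
  fun a => (a \in Delta) && (dotv ah a == 0).

Definition pos_roots_Itilde (Phi Delta : seq vec) (ah : vec) (b : vec) : Prop :=
  pos_root Phi Delta b /\
  exists c : vec -> R, b = \sum_(a <- Delta | Itilde Delta ah a) c a *: a.

Definition in_XI (Phi Delta : seq vec) (ah : vec) (w : 'M[R]_n) : Prop :=
  inW Phi w /\
  forall g, pos_roots_Itilde Phi Delta ah g -> pos_root Phi Delta (w *m g).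

Definition is_x (Phi Delta : seq vec) (ah beta : vec) (w : 'M[R]_n) : Prop :=
  in_XI Phi Delta ah w /\ w *m ah = beta.

End RootSystems.

(* Main.v *)
From Stdlib Require Import ClassicalDescription.
Require Import Defs.
From mathcomp Require Import all_boot all_order all_algebra.
From mathcomp Require Import ring lra zify.
Set Implicit Arguments. Unset Strict Implicit. Unset Printing Implicit Defensive.
Import Order.TTheory GRing.Theory Num.Theory.
Local Open Scope ring_scope.



Section LA.
Variables (R : realFieldType) (n : nat).
Notation vec := 'cV[R]_n.
Implicit Types (u v w a b : vec) (s t : seq vec).

Lemma dotvC u v : dotv u v = dotv v u.
Proof. by rewrite /dotv; apply: eq_bigr => i _; rewrite mulrC. Qed.

Lemma dotvDl u v w : dotv (u + v) w = dotv u w + dotv v w.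
Proof. by rewrite /dotv -big_split; apply: eq_bigr => i _; rewrite mxE mulrDl. Qed.

Lemma dotvZl k u v : dotv (k *: u) v = k * dotv u v.
Proof. by rewrite /dotv mulr_sumr; apply: eq_bigr => i _; rewrite mxE mulrA. Qed.

Lemma dotvNl u v : dotv (- u) v = - dotv u v.
Proof. by rewrite -scaleN1r dotvZl mulN1r. Qed.

Lemma dotvBl u v w : dotv (u - v) w = dotv u w - dotv v w.
Proof. by rewrite dotvDl dotvNl. Qed.

Lemma dotv0l v : dotv 0 v = 0.
Proof. by rewrite -(scale0r 0) dotvZl mul0r. Qed.

Lemma dotvDr u v w : dotv w (u + v) = dotv w u + dotv w v.
Proof. by rewrite dotvC dotvDl !(dotvC w). Qed.
Lemma dotvZr k u v : dotv v (k *: u) = k * dotv v u.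
Proof. by rewrite dotvC dotvZl dotvC. Qed.
Lemma dotvNr u v : dotv v (- u) = - dotv v u.
Proof. by rewrite dotvC dotvNl dotvC. Qed.
Lemma dotvBr u v w : dotv w (u - v) = dotv w u - dotv w v.
Proof. by rewrite dotvDr dotvNr. Qed.
Lemma dotv0r v : dotv v 0 = 0.
Proof. by rewrite dotvC dotv0l. Qed.

Lemma dotv_sumr (I : Type) (s : seq I) (P : pred I) (F : I -> vec) u :
  dotv u (\sum_(i <- s | P i) F i) = \sum_(i <- s | P i) dotv u (F i).
Proof. by apply: (big_morph (dotv u)); [move=> x y; exact: dotvDr | exact: dotv0r]. Qed.

Lemma dotv_suml (I : Type) (s : seq I) (P : pred I) (F : I -> vec) u :
  dotv (\sum_(i <- s | P i) F i) u = \sum_(i <- s | P i) dotv (F i) u.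
Proof. by rewrite dotvC dotv_sumr; apply: eq_bigr => i _; rewrite dotvC. Qed.

Lemma dotv_ge0 u : 0 <= dotv u u.
Proof. by apply: sumr_ge0 => i _; rewrite -expr2 sqr_ge0. Qed.

Lemma dotv_eq0 u : (dotv u u == 0) = (u == 0).
Proof.
apply/idP/idP => [/eqP H|/eqP->]; last by rewrite dotv0l.
apply/eqP/matrixP => i j; rewrite !ord1 mxE.
have H2 : \sum_(k < n) (u k ord0) ^+ 2 = 0.
  by rewrite -[RHS]H /dotv; apply: eq_bigr => k _; rewrite expr2.
have := psumr_eq0P (fun k _ => sqr_ge0 (u k ord0)) H2.
by move=> /(_ i isT) /eqP; rewrite sqrf_eq0 => /eqP.
Qed.

Lemma dotv_gt0 u : u != 0 -> 0 < dotv u u.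
Proof. by move=> nz; rewrite lt_def dotv_eq0 nz dotv_ge0. Qed.

Lemma trmx_mul_dot u v : u^T *m v = (dotv u v)%:M.
Proof.
apply/matrixP => i j; rewrite !ord1 !mxE eqxx /=.
by apply: eq_bigr => k _; rewrite mxE.
Qed.

Definition rcoef a v := 2 * dotv a v / dotv a a.

Lemma refl_mxE a v : refl_mx a *m v = v - rcoef a v *: a.
Proof.
rewrite /refl_mx mulmxBl mul1mx -scalemxAl -mulmxA trmx_mul_dot mul_mx_scalar.
by rewrite scalerA /rcoef mulrAC.
Qed.

Lemma mx_ext (A B : 'M[R]_n) : (forall v, A *m v = B *m v) -> A = B.
Proof.
move=> H; apply/matrixP => i j.
have /matrixP/(_ i ord0) := H (delta_mx j 0).
by rewrite -!colE !mxE.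
Qed.

Lemma refl_refl a v : a != 0 -> refl_mx a *m (refl_mx a *m v) = v.
Proof.
move=> nz; have ha := dotv_gt0 nz.
rewrite !refl_mxE; set k := rcoef a v.
have -> : rcoef a (v - k *: a) = - k.
  rewrite /rcoef dotvBr dotvZr /k /rcoef. field. by rewrite lt0r_neq0.
by rewrite scaleNr opprK subrK.
Qed.

Lemma refl_dot a u v : a != 0 ->
  dotv (refl_mx a *m u) (refl_mx a *m v) = dotv u v.
Proof.
move=> nz; have ha := dotv_gt0 nz; have ha' := lt0r_neq0 ha.
rewrite !refl_mxE !(dotvBl, dotvBr, dotvZl, dotvZr) /rcoef (dotvC u a).
field; done.
Qed.

Lemma refl_self a : a != 0 -> refl_mx a *m a = - a.
Proof.
move=> nz; rewrite refl_mxE /rcoef mulfK; last by rewrite dotv_eq0.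
by rewrite scaler_nat mulr2n opprD addNKr.
Qed.

Lemma reflN a : refl_mx (- a) = refl_mx a.
Proof.
apply: mx_ext => v; rewrite !refl_mxE /rcoef dotvNl dotvNr dotvNl opprK.
by rewrite scalerN -scaleNr mulrN mulNr opprK.
Qed.

Definition isom (M : 'M[R]_n) := forall u v, dotv (M *m u) (M *m v) = dotv u v.

Lemma isom_conj (M : 'M[R]_n) a : isom M ->
  refl_mx (M *m a) *m M = M *m refl_mx a.
Proof.
move=> iM; apply: mx_ext => v.
rewrite -!mulmxA !refl_mxE mulmxBr -scalemxAr /rcoef !iM.
by [].
Qed.

Lemma isom_inj (M : 'M[R]_n) u v : isom M -> M *m u = M *m v -> u = v.
Proof.
move=> iM H; apply/eqP; rewrite -subr_eq0 -dotv_eq0 -iM mulmxBr H subrr.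
by rewrite dotv0l.
Qed.

Lemma isom1 : isom 1%:M.
Proof. by move=> u v; rewrite !mul1mx. Qed.

Lemma isomM (M N : 'M[R]_n) : isom M -> isom N -> isom (M *m N).
Proof. by move=> iM iN u v; rewrite -!mulmxA iM iN. Qed.

Lemma isom_refl a : a != 0 -> isom (refl_mx a).
Proof. by move=> nz u v; exact: refl_dot. Qed.

Lemma word_cons a s : word_mx (a :: s) = refl_mx a *m word_mx s.
Proof. by []. Qed.

Lemma word_rcons s a : word_mx (rcons s a) = word_mx s *m refl_mx a.
Proof.
elim: s => [|b s IH] /=; first by rewrite mulmx1 mul1mx.
by rewrite IH mulmxA.
Qed.

Lemma word_cat s t : word_mx (s ++ t) = word_mx s *m word_mx t.
Proof. by elim: s => [|b s IH] /=; rewrite ?mul1mx // IH mulmxA. Qed.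

Lemma word_isom s : all (fun a => a != 0) s -> isom (word_mx s).
Proof.
elim: s => [|b s IH] /=; first by move=> _ u v; rewrite !mul1mx.
by case/andP => nb /IH; apply: isomM; apply: isom_refl.
Qed.

Lemma word_rev s : all (fun a => a != 0) s -> word_mx (rev s) *m word_mx s = 1%:M.
Proof.
elim: s => [|b s IH] /=; first by rewrite mulmx1.
case/andP => nb /IH H; rewrite rev_cons word_rcons -mulmxA (mulmxA (refl_mx b)).
have -> : refl_mx b *m refl_mx b = 1%:M by apply: mx_ext => v; rewrite -mulmxA refl_refl // mul1mx.
by rewrite mul1mx.
Qed.

Lemma word_rev' s : all (fun a => a != 0) s -> word_mx s *m word_mx (rev s) = 1%:M.
Proof.
move=> H; have := word_rev (s := rev s); rewrite revK; apply.
by rewrite all_rev.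
Qed.

End LA.



Section RS.
Variables (R : realFieldType) (n : nat) (Phi Delta : seq 'cV[R]_n).
Notation vec := 'cV[R]_n.
Implicit Types (u v w a b : vec) (s t : seq vec).
Hypothesis rs : root_system Phi.
Hypothesis bs : is_basis Phi Delta.

Lemma root_nz a : a \in Phi -> a != 0.
Proof. by case: rs => [[_ h0] _ _ _ _] aP; apply: contraNneq h0 => <-. Qed.

Lemma refl_root a b : a \in Phi -> b \in Phi -> refl_mx a *m b \in Phi.
Proof. by case: rs => _ _ h _ _; apply: h. Qed.

Lemma Nroot a : a \in Phi -> - a \in Phi.
Proof. by move=> aP; rewrite -refl_self ?root_nz // refl_root. Qed.

Lemma uniq_Phi : uniq Phi.
Proof. by case: rs => [[]]. Qed.

Lemma Delta_Phi : {subset Delta <= Phi}.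
Proof. by case: bs. Qed.

Lemma uniq_Delta : uniq Delta.
Proof. by case: bs. Qed.

Lemma allnz s : all (mem Phi) s -> all (fun a => a != 0) s.
Proof. by move=> /allP H; apply/allP => a /H; apply: root_nz. Qed.

Lemma word_root s b : all (mem Phi) s -> b \in Phi -> word_mx s *m b \in Phi.
Proof.
elim: s => [|a s IH] /=; first by rewrite mul1mx.
by case/andP => aP sP bP; rewrite -mulmxA refl_root // IH.
Qed.

Lemma word_isomP s : all (mem Phi) s -> isom (word_mx s).
Proof. by move=> /allnz; exact: word_isom. Qed.

Lemma allD s : all (mem Delta) s -> all (mem Phi) s.
Proof. by move=> /allP H; apply/allP => a /H /Delta_Phi. Qed.

Notation m := (size Delta).
Definition comb (c : 'I_m -> R) : vec := \sum_(i < m) c i *: Delta`_i.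

Lemma combB c d : comb c - comb d = comb (fun i => c i - d i).
Proof. by rewrite /comb -sumrB; apply: eq_bigr => i _; rewrite scalerBl. Qed.

Lemma combN c : - comb c = comb (fun i => - c i).
Proof. by rewrite /comb -sumrN; apply: eq_bigr => i _; rewrite scaleNr. Qed.

Lemma combD c d : comb c + comb d = comb (fun i => c i + d i).
Proof. by rewrite /comb -big_split; apply: eq_bigr => i _; rewrite scalerDl. Qed.

Lemma combZ k c : k *: comb c = comb (fun i => k * c i).
Proof. by rewrite /comb scaler_sumr; apply: eq_bigr => i _; rewrite scalerA. Qed.

Lemma comb_inj c d : comb c = comb d -> forall i, c i = d i.
Proof.
move=> H i; apply/eqP; rewrite -subr_eq0; apply/eqP.
case: bs => _ _ li _; apply: (li (fun i => c i - d i)).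
by rewrite -[LHS]/(comb (fun i => c i - d i)) -combB H subrr.
Qed.

Lemma comb_delta j : comb (fun i => (i == j)%:R) = Delta`_j.
Proof.
rewrite /comb (bigD1 j) //= eqxx scale1r big1 ?addr0 // => i /negPf ->.
by rewrite scale0r.
Qed.

Lemma nonneg_combE b : nonneg_comb Delta b <->
  exists c : 'I_m -> nat, b = comb (fun i => (c i)%:R).
Proof. by []. Qed.

Lemma not_pos_neg b : b \in Phi -> nonneg_comb Delta b -> nonneg_comb Delta (- b) -> False.
Proof.
move=> bP [c Hc] [d]; rewrite Hc => Hd.
have H : comb (fun i => (c i)%:R + (d i)%:R) = comb (fun i => 0).
  have Hd' : comb (fun i => (d i)%:R) = - comb (fun i => (c i)%:R) by exact: (esym Hd).
  rewrite -(combD (fun i => (c i)%:R) (fun i => (d i)%:R)) Hd' subrr /comb big1 // => i _.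
  by rewrite scale0r.
have c0 i : c i = 0%N.
  have := comb_inj H i; rewrite -natrD => /eqP; rewrite pnatr_eq0 addn_eq0.
  by case/andP => /eqP.
have := root_nz bP; rewrite Hc big1 ?eqxx // => i _.
by rewrite c0 scale0r.
Qed.

Lemma pos_or_neg b : b \in Phi -> nonneg_comb Delta b \/ nonneg_comb Delta (- b).
Proof. by case: bs => _ _ _; apply. Qed.

Definition posb b : bool :=
  if excluded_middle_informative (nonneg_comb Delta b) then true else false.

Lemma posbP b : reflect (nonneg_comb Delta b) (posb b).
Proof. by rewrite /posb; case: excluded_middle_informative => h; constructor. Qed.

Lemma posbN b : b \in Phi -> posb (- b) = ~~ posb b.
Proof.
move=> bP; case: (posbP b) => h; case: (posbP (- b)) => h' //.
  by case: (not_pos_neg bP h h').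
by case: (pos_or_neg bP).
Qed.

Lemma sign_pos b (r : 'I_m -> R) j : b \in Phi -> b = comb r -> 0 < r j -> posb b.
Proof.
move=> bP Hb rj; apply/posbP; case: (pos_or_neg bP) => // -[d Hd].
have : comb r = comb (fun i => - (d i)%:R).
  rewrite -(combN (fun i => (d i)%:R)) -Hb; apply: oppr_inj; rewrite opprK; exact: Hd.
move=> /comb_inj /(_ j) E; move: rj; rewrite E oppr_gt0.
by rewrite ltNge ler0n.
Qed.

Lemma sign_neg b (r : 'I_m -> R) j : b \in Phi -> b = comb r -> r j < 0 -> ~~ posb b.
Proof.
move=> bP Hb rj; rewrite -posbN //; apply: (sign_pos (r := fun i => - r i) (j := j)).
- exact: Nroot.
- by rewrite Hb combN.
- by rewrite oppr_gt0.
Qed.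

Lemma pos_coef b : b \in Phi -> posb b ->
  exists c : 'I_m -> nat, b = comb (fun i => (c i)%:R) /\ exists j, (0 < c j)%N.
Proof.
move=> bP /posbP [c Hc]; exists c; split => //.
apply/existsP; apply: contraT; rewrite negb_exists => /forallP H0.
have := root_nz bP; rewrite Hc /comb big1 ?eqxx // => i _.
by move: (H0 i); rewrite -leqNgt leqn0 => /eqP ->; rewrite scale0r.
Qed.

Definition idx a (aD : a \in Delta) : 'I_m := Ordinal (etrans (index_mem a Delta) aD).

Lemma idxE a (aD : a \in Delta) : Delta`_(idx aD) = a.
Proof. by rewrite /idx /= nth_index. Qed.

Lemma nth_Delta_inj (i j : 'I_m) : Delta`_i = Delta`_j -> i = j.
Proof.
move=> /eqP; rewrite nth_uniq ?uniq_Delta // => /eqP H; exact: val_inj.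
Qed.

Lemma Delta_mem (i : 'I_m) : Delta`_i \in Delta.
Proof. by rewrite mem_nth. Qed.

Lemma sref_pos al b : al \in Delta -> b \in Phi -> posb b -> b != al ->
  posb (refl_mx al *m b).
Proof.
move=> aD bP pb nba.
have aP := Delta_Phi aD.
have [c [Hc [j cj]]] := pos_coef bP pb.
set j0 := idx aD.
have [k Hk] : exists k, (k != j0) && (0 < c k)%N.
  apply/existsP; apply: contraT; rewrite negb_exists => /forallP H0.
  have Hb : b = (c j0)%:R *: al.
    rewrite Hc /comb (bigD1 j0) //= idxE // big1 ?addr0 // => i ni.
    by move: (H0 i); rewrite ni /= -leqNgt leqn0 => /eqP ->; rewrite scale0r.
  case: rs => _ _ _ _ red.
  have := red al (c j0)%:R aP; rewrite -Hb => /(_ bP) [E|E].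
    by move: nba; rewrite Hb E scale1r eqxx.
  by move: (ler0n R (c j0)); rewrite E; lra.
case/andP: Hk => nk ck.
apply: (sign_pos (r := fun i => (c i)%:R - rcoef al b * (i == j0)%:R) (j := k)).
- exact: refl_root.
- rewrite refl_mxE; set kk := rcoef al b.
  rewrite -[in kk *: al](idxE aD) -/j0 -(comb_delta j0) combZ {1}Hc combB.
  by [].
- by rewrite (negPf nk) mulr0 subr0 ltr0n.
Qed.

Definition ninv (M : 'M[R]_n) : nat :=
  count (fun b => posb b && ~~ posb (M *m b)) Phi.

End RS.



Section W.
Variables (R : realFieldType) (n : nat) (Phi Delta : seq 'cV[R]_n).
Notation vec := 'cV[R]_n.
Implicit Types (u v w a b : vec) (s t : seq vec).
Hypothesis rs : root_system Phi.
Hypothesis bs : is_basis Phi Delta.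
Notation posb := (posb Delta).
Notation ninv := (ninv Phi Delta).

Lemma perm_Phi (M : 'M[R]_n) : isom M -> (forall b, b \in Phi -> M *m b \in Phi) ->
  perm_eq Phi (map (mulmx M) Phi).
Proof.
move=> iM MP; have uP := uniq_Phi rs.
have um : uniq (map (mulmx M) Phi).
  by rewrite map_inj_in_uniq // => x y _ _; apply: isom_inj.
have sub : {subset map (mulmx M) Phi <= Phi} by move=> x /mapP [y yP ->]; apply: MP.
have := uniq_min_size um sub; rewrite size_map => /(_ (leqnn _)) [_ E].
by apply: uniq_perm => // x; rewrite E.
Qed.

Lemma count_Phi (M : 'M[R]_n) (P : pred vec) : isom M ->
  (forall b, b \in Phi -> M *m b \in Phi) ->
  count P Phi = count (fun b => P (M *m b)) Phi.
Proof. by move=> iM MP; rewrite (permP (perm_Phi iM MP)) count_map. Qed.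

Lemma count_add (T : eqType) (s : seq T) (f g p q : pred T) :
  {in s, forall x, (g x + p x = f x + q x)%N} ->
  (count g s + count p s = count f s + count q s)%N.
Proof.
elim: s => [|x s IH] //= H.
have := H x (mem_head _ _); have := IH (fun y ys => H y (mem_behead (s := x :: s) ys)).
lia.
Qed.

Lemma count_pred1_and (T : eqType) (s : seq T) x (X : bool) :
  x \in s -> uniq s -> count (fun y => (y == x) && X) s = X.
Proof.
move=> xs us; case: X.
  by rewrite (eq_count (a2 := pred1 x)) ?count_uniq_mem ?xs // => y; rewrite andbT.
by rewrite (eq_count (a2 := pred0)) ?count_pred0 // => y; rewrite andbF.
Qed.

Lemma refl_sq a : a != 0 -> refl_mx a *m refl_mx a = 1%:M.
Proof. by move=> nz; apply: mx_ext => v; rewrite -mulmxA refl_refl // mul1mx. Qed.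

Lemma refl_mxN a b : refl_mx a *m (- b) = - (refl_mx a *m b).
Proof. by rewrite mulmxN. Qed.

Lemma ninv_refl (M : 'M[R]_n) al : isom M -> (forall b, b \in Phi -> M *m b \in Phi) ->
  al \in Delta ->
  (ninv (M *m refl_mx al) + ~~ posb (M *m al) = ninv M + posb (M *m al))%N.
Proof.
move=> iM MP aD; have aP := Delta_Phi bs aD; have anz := root_nz rs aP.
have naP := Nroot rs aP.
have ane : al != - al.
  apply: contra anz => /eqP H.
  have : al *+ 2 = 0 by rewrite mulr2n {2}H subrr.
  by rewrite -scaler_nat => /eqP; rewrite scaler_eq0 pnatr_eq0.
have pa : posb al.
  apply/posbP; exists (fun i => (i == idx aD)%N); rewrite -{1}(idxE aD) -(comb_delta (idx aD)) /comb.
  by apply: eq_bigr => i _; case: (i == idx aD).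
rewrite /ninv (count_Phi _ (isom_refl anz) (fun b bP => refl_root rs aP bP)).
rewrite -(count_pred1_and (~~ posb (M *m al)) aP (uniq_Phi rs)).
rewrite -(count_pred1_and (posb (M *m al)) naP (uniq_Phi rs)).
apply: count_add => b bP /=.
rewrite mulmxA -(mulmxA M) refl_sq // mulmx1.
have [->|nba] := eqVneq b al.
  rewrite refl_self // (posbN rs bs) // pa (negbTE ane) /=.
  by case: (posb (M *m al)).
have [->|nbna] := eqVneq b (- al).
  rewrite refl_mxN refl_self // opprK pa mulmxN !(posbN rs bs) ?MP // pa.
  by case: (posb (M *m al)).
rewrite /= !addn0.
suff -> : posb (refl_mx al *m b) = posb b by [].
case pb: (posb b); first exact: (sref_pos rs bs).
apply: negbTE; rewrite -(posbN rs bs) ?refl_root //.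
rewrite -mulmxN; apply: (sref_pos rs bs) => //; first exact: (Nroot rs).
  by rewrite (posbN rs bs) // pb.
by apply: contra nbna => /eqP <-; rewrite opprK.
Qed.

End W.



Section D.
Variables (R : realFieldType) (n : nat) (Phi Delta : seq 'cV[R]_n).
Notation vec := 'cV[R]_n.
Implicit Types (u v w a b : vec) (s t : seq vec).
Hypothesis rs : root_system Phi.
Hypothesis bs : is_basis Phi Delta.
Notation posb := (posb Delta).
Notation ninv := (ninv Phi Delta).

Definition dword t := all (mem Delta) t.

Lemma dword_Phi t : dword t -> all (mem Phi) t.
Proof. by move=> H; apply: (allD bs). Qed.

Lemma dword_isom t : dword t -> isom (word_mx t).
Proof. move=> tD; exact: (word_isomP rs (dword_Phi tD)). Qed.

Lemma dword_root t b : dword t -> b \in Phi -> word_mx t *m b \in Phi.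
Proof. move=> tD; exact: (word_root rs (dword_Phi tD)). Qed.

Lemma pos_simple al : al \in Delta -> posb al.
Proof.
move=> aD; apply/posbP; exists (fun i => (i == idx aD)%N).
rewrite -{1}(idxE aD) -(comb_delta (idx aD)) /comb.
by apply: eq_bigr => i _; case: (i == idx aD).
Qed.

Lemma exch t al : dword t -> al \in Delta -> ~~ posb (word_mx t *m al) ->
  exists t2, [/\ dword t2, (size t2).+1 = size t & word_mx t2 = word_mx t *m refl_mx al].
Proof.
move=> + alD; elim: t => [|a t IH] /=.
  by rewrite mul1mx pos_simple.
case/andP => aD tD; rewrite -mulmxA => H.
have aP := Delta_Phi bs aD; have alP := Delta_Phi bs alD.
case pt: (posb (word_mx t *m al)).
  have ba : word_mx t *m al = a.
    apply/eqP; apply: contraNT H => nba.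
    by apply: (sref_pos rs bs) => //; apply: dword_root.
  exists t; split => //.
  have := isom_conj al (dword_isom tD); rewrite ba => ->.
  by rewrite -mulmxA refl_sq ?mulmx1 // (root_nz rs).
have [t2 [t2D sz w2]] := IH tD (negbT pt).
exists (a :: t2); split => //=; first by rewrite aD.
  by rewrite sz.
by rewrite w2 mulmxA.
Qed.

Definition reduced t :=
  forall t2, dword t2 -> word_mx t2 = word_mx t -> (size t <= size t2)%N.

Lemma dword_rcons t al : dword (rcons t al) = dword t && (al \in Delta).
Proof. by rewrite /dword all_rcons andbC. Qed.

Lemma reduced_rcons t al : dword (rcons t al) -> reduced (rcons t al) -> reduced t.
Proof.
rewrite dword_rcons => /andP [tD aD] red t2 t2D w2.
have := red (rcons t2 al); rewrite dword_rcons t2D aD !word_rcons w2 !size_rcons.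
by move=> /(_ isT erefl).
Qed.

Lemma reduced_last t al : dword (rcons t al) -> reduced (rcons t al) ->
  posb (word_mx t *m al).
Proof.
move=> D red; move: (D); rewrite dword_rcons => /andP [tD aD].
apply: contraT => H; have [t2 [t2D sz w2]] := exch tD aD H.
have := red t2 t2D; rewrite w2 word_rcons size_rcons => /(_ erefl).
lia.
Qed.

Lemma ninv1 : ninv 1%:M = 0%N.
Proof.
by rewrite /ninv (eq_count (a2 := pred0)) ?count_pred0 // => b; rewrite mul1mx andbN.
Qed.

Lemma reduced_ninv t : dword t -> reduced t -> ninv (word_mx t) = size t.
Proof.
elim/last_ind: t => [|t al IH] tD red; first exact: ninv1.
move: (tD); rewrite dword_rcons => /andP [tD' aD].
have pl := reduced_last tD red.
have := ninv_refl rs bs (dword_isom tD') (fun b => dword_root tD') aD.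
rewrite pl IH //; last exact: reduced_rcons red.
rewrite word_rcons size_rcons /=; lia.
Qed.

Lemma hwsP (w : 'M[R]_n) k : has_word_of_size Delta w k ->
  exists t, [/\ dword t, size t = k & word_mx t = w].
Proof.
move=> /existsP [tp /eqP H]; exists (map (fun i : 'I_(size Delta) => Delta`_i) tp).
split => //; last by rewrite size_map size_tuple.
by apply/allP => x /mapP [i _ ->]; exact: mem_nth.
Qed.

Lemma hwsI t : dword t -> has_word_of_size Delta (word_mx t) (size t).
Proof.
case: t => [|a t0] tD.
  by apply/existsP; exists [tuple]; rewrite /=.
have aD : a \in Delta by case/andP: tD.
set d0 := idx aD.
pose f x := insubd d0 (index x Delta) : 'I_(size Delta).
have E x : x \in a :: t0 -> Delta`_(f x) = x.
  move=> xt; have xD : x \in Delta by move/allP: tD => /(_ x xt).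
  by rewrite /f val_insubd index_mem xD nth_index.
apply/existsP; exists (@Tuple _ _ (map f (a :: t0)) (introT eqP (size_map f _))).
apply/eqP; congr word_mx; rewrite /= E ?mem_head //; congr cons.
rewrite -map_comp -[RHS]map_id; apply/eq_in_map => x xt /=.
by apply: E; rewrite inE xt orbT.
Qed.

Lemma lengthW_ninv t : dword t -> lengthW Delta (word_mx t) = ninv (word_mx t).
Proof.
move=> tD; rewrite /lengthW; case: excluded_middle_informative => [h|h]; last first.
  by exfalso; apply: h; exists (size t); exact: hwsI.
case: ex_minnP => k /hwsP [t' [t'D szt' wt']] kmin.
rewrite -wt' reduced_ninv // ?szt' //.
rewrite /reduced => t2 t2D wt2; rewrite szt'; apply: kmin.
by have := hwsI t2D; rewrite wt2 wt'.
Qed.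

End D.



Section E.
Variables (R : realFieldType) (n : nat) (Phi Delta : seq 'cV[R]_n).
Notation vec := 'cV[R]_n.
Implicit Types (u v w a b : vec) (s t : seq vec).
Hypothesis rs : root_system Phi.
Hypothesis bs : is_basis Phi Delta.
Notation posb := (posb Delta).
Notation ninv := (ninv Phi Delta).
Notation m := (size Delta).


Lemma refl_dword_pos N : forall b (c : 'I_m -> nat), b \in Phi ->
  b = comb (fun i => (c i)%:R) -> (\sum_i c i <= N)%N ->
  exists t, dword Delta t /\ word_mx t = refl_mx b.
Proof.
elim: N => [|N IH] b c bP Hb Hs.
  exfalso; have := root_nz rs bP; rewrite Hb /comb big1 ?eqxx // => i _.
  have : (c i <= \sum_i c i)%N by rewrite (bigD1 i) //= leq_addr.
  by move: Hs; rewrite leqn0 => /eqP -> ; rewrite leqn0 => /eqP ->; rewrite scale0r.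
case bD: (b \in Delta).
  by exists [:: b]; rewrite /dword /= bD mulmx1.
have pb : posb b by apply/posbP; exists c.
have [j /andP [cj dj]] : exists j, (0 < c j)%N && (0 < dotv Delta`_j b).
  apply/existsP; apply: contraT; rewrite negb_exists => /forallP H.
  have : dotv b b <= 0.
    rewrite {1}Hb /comb dotv_suml; apply: sumr_le0 => i _; rewrite dotvZl.
    move: (H i); rewrite negb_and -leqNgt -leNgt leqn0 => /orP [/eqP ->|Hi].
      by rewrite mul0r.
    by apply: mulr_ge0_le0.
  by rewrite leNgt dotv_gt0 ?(root_nz rs) .
set al := Delta`_j.
have alD : al \in Delta by exact: Delta_mem.
have alP := Delta_Phi bs alD.
have nba : b != al by apply: contraFneq bD => ->.
set b' := refl_mx al *m b.
have b'P : b' \in Phi by exact: refl_root.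
have pb' : posb b' by exact: (sref_pos rs bs).
have [c' Hc'] : nonneg_comb Delta b' by apply/posbP.
set z := rcoef al b.
have [k Hk] : exists k : int, z = k%:~R.
  case: rs => _ _ _ ip _; have [k Hk] := ip al b alP bP.
  by exists k; rewrite /z /rcoef dotvC.
have z1 : 1 <= z.
  have zp : 0 < z by rewrite /z /rcoef divr_gt0 ?mulr_gt0 ?dotv_gt0 ?(root_nz rs).
  move: zp; rewrite Hk ltr0z ler1z; lia.
have E : comb (fun i => (c' i)%:R) = comb (fun i => (c i)%:R - z * (i == j)%:R).
  transitivity b'; first exact: (esym Hc').
  rewrite -(combB (fun i => (c i)%:R)) -(combZ z) comb_delta -Hb.
  by rewrite /b' refl_mxE.
have Ej := comb_inj bs E j; rewrite eqxx mulr1 in Ej.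
have Eo i : i != j -> c' i = c i.
  move=> ij; have := comb_inj bs E i; rewrite (negPf ij) mulr0 subr0.
  by move/eqP; rewrite eqr_nat => /eqP.
have cjlt : (c' j < c j)%N.
  rewrite -(ltr_nat R) Ej; lra.
have [t' [t'D wt']] : exists t', dword Delta t' /\ word_mx t' = refl_mx b'.
  apply: (IH b' c') => //.
  have Hsum : (\sum_i c' i < \sum_i c i)%N.
    rewrite (bigD1 j) //= [X in (_ < X)%N](bigD1 j) //=.
    have -> : (\sum_(i | i != j) c' i = \sum_(i | i != j) c i)%N.
      by apply: eq_bigr => i ij; rewrite Eo.
    by rewrite ltn_add2r.
  lia.
exists (al :: rcons t' al); split.
  by rewrite /dword /= alD; rewrite -/(dword Delta (rcons t' al)) dword_rcons t'D alD.
rewrite word_cons word_rcons wt'.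
have hb : refl_mx al *m b' = b by rewrite refl_refl ?(root_nz rs).
have := isom_conj b' (isom_refl (root_nz rs alP)); rewrite hb => H.
by rewrite mulmxA -H -mulmxA refl_sq ?mulmx1 // (root_nz rs).
Qed.


Lemma refl_dword b : b \in Phi -> exists t, dword Delta t /\ word_mx t = refl_mx b.
Proof.
move=> bP; case pb: (posb b).
  have [c Hc] : nonneg_comb Delta b by apply/posbP.
  exact: (refl_dword_pos (N := \sum_i c i) bP Hc).
have nbP := Nroot rs bP.
have [c Hc] : nonneg_comb Delta (- b) by apply/posbP; rewrite (posbN rs bs) // pb.
rewrite -reflN; exact: (refl_dword_pos (N := \sum_i c i) nbP Hc).
Qed.

Lemma W_dword s : all (mem Phi) s -> exists t, dword Delta t /\ word_mx t = word_mx s.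
Proof.
elim: s => [|a s IH] /=; first by exists [::].
case/andP => aP /IH [t [tD wt]]; have [ta [taD wa]] := refl_dword aP.
exists (ta ++ t); split; first by rewrite /dword all_cat; apply/andP.
by rewrite word_cat wa wt.
Qed.

Lemma reduced_exists t : dword Delta t ->
  exists t', [/\ dword Delta t', reduced Delta t' & word_mx t' = word_mx t].
Proof.
move=> tD; have ex : exists k, has_word_of_size Delta (word_mx t) k.
  by exists (size t); exact: hwsI.
case: (ex_minnP ex) => k /hwsP [t' [t'D szt' wt']] kmin.
exists t'; split => // t2 t2D wt2; rewrite szt'; apply: kmin.
by have := hwsI t2D; rewrite wt2 wt'.
Qed.

End E.

Section F.
Variables (R : realFieldType) (n : nat) (Phi Delta : seq 'cV[R]_n) (ah : 'cV[R]_n).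
Notation vec := 'cV[R]_n.
Implicit Types (u v w a b : vec) (s t : seq vec).
Hypothesis rs : root_system Phi.
Hypothesis bs : is_basis Phi Delta.
Hypothesis hr : highest_root Phi Delta ah.
Notation posb := (posb Delta).
Notation ninv := (ninv Phi Delta).
Notation m := (size Delta).

Lemma ahP : ah \in Phi. Proof. by case: hr. Qed.

Lemma dominant al : al \in Delta -> 0 <= dotv al ah.
Proof.
move=> aD; have aP := Delta_Phi bs aD; have anz := root_nz rs aP.
have ha := dotv_gt0 anz.
have [_ H] := hr; have [d Hd] := H _ (refl_root rs aP ahP).
have E : comb (fun i => (d i)%:R) = comb (fun i => rcoef al ah * (i == idx aD)%:R).
  transitivity (ah - refl_mx al *m ah); first exact: (esym Hd).
  by rewrite -combZ comb_delta idxE refl_mxE opprB addrC subrK.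
have := comb_inj bs E (idx aD); rewrite eqxx mulr1 => Ec.
have c0 : 0 <= rcoef al ah by rewrite -Ec ler0n.
have -> : dotv al ah = rcoef al ah * dotv al al / 2.
  rewrite /rcoef; field; by rewrite lt0r_neq0.
by apply: divr_ge0 => //; apply: mulr_ge0 => //; apply: ltW.
Qed.

Lemma pos_dot b : b \in Phi -> posb b -> 0 <= dotv b ah.
Proof.
move=> bP /posbP [c ->]; rewrite dotv_suml; apply: sumr_ge0 => i _.
by rewrite dotvZl mulr_ge0 ?ler0n ?dominant ?Delta_mem.
Qed.

Lemma dot_pos b : b \in Phi -> 0 < dotv b ah -> posb b.
Proof.
move=> bP H; apply: contraT => nb.
have := pos_dot (Nroot rs bP); rewrite (posbN rs bs) // nb dotvNl oppr_ge0 => /(_ isT).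
by rewrite leNgt H.
Qed.

Lemma neg_dot b : b \in Phi -> ~~ posb b -> dotv b ah <= 0.
Proof.
move=> bP nb; have := pos_dot (Nroot rs bP); rewrite (posbN rs bs) // nb dotvNl oppr_ge0.
by apply.
Qed.

Lemma refl_neg_dot g a : g \in Phi -> posb g -> a \in Phi -> posb a ->
  ~~ posb (refl_mx a *m g) -> 0 < dotv g a.
Proof.
move=> gP pg aP pa H; rewrite ltNge; apply: contra H => Hle.
have [cg [Hg [j cj]]] := pos_coef rs gP pg.
have [ca Hca] : nonneg_comb Delta a by apply/posbP.
have anz := root_nz rs aP.
have z0 : rcoef a g <= 0.
  rewrite /rcoef dotvC; apply: mulr_le0_ge0; first by rewrite pmulr_rle0 ?ltr0n.
  by rewrite invr_ge0 ltW // dotv_gt0.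
apply: (sign_pos bs (r := fun i => (cg i)%:R - rcoef a g * (ca i)%:R) (j := j)).
- exact: refl_root.
- rewrite refl_mxE; set k := rcoef a g.
  have Ha : a = comb (fun i => (ca i)%:R) by exact: Hca.
  rewrite [in k *: a]Ha {1}Hg combZ combB.
  by [].
- have : 0 <= - rcoef a g * (ca j)%:R by rewrite mulr_ge0 ?ler0n // oppr_ge0.
  have : (0 : R) < (cg j)%:R by rewrite ltr0n.
  lra.
Qed.

End F.



Section G.
Variables (R : realFieldType) (n : nat) (Phi Delta : seq 'cV[R]_n) (ah : 'cV[R]_n).
Notation vec := 'cV[R]_n.
Implicit Types (u v w a b : vec) (s t : seq vec).
Hypothesis rs : root_system Phi.
Hypothesis bs : is_basis Phi Delta.
Hypothesis hr : highest_root Phi Delta ah.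
Notation posb := (posb Delta).
Notation ninv := (ninv Phi Delta).
Notation I := (Itilde Delta ah).

Definition spanI v := exists c : vec -> R, v = \sum_(a <- Delta | I a) c a *: a.

Lemma sumI_delta al : I al -> \sum_(a <- Delta | I a) (a == al)%:R *: a = al.
Proof.
move=> Ial; have alD : al \in Delta by case/andP: Ial.
rewrite -big_filter (bigD1_seq al) ?filter_uniq ?(uniq_Delta bs) //; last first.
  by rewrite mem_filter Ial.
rewrite eqxx scale1r big1; first exact: addr0.
by move=> i ni; rewrite (negbTE ni) scale0r.
Qed.

Lemma spanI_refl al v : I al -> spanI v -> spanI (refl_mx al *m v).
Proof.
move=> Ial [c Hc]; exists (fun a => c a - rcoef al v * (a == al)%:R).
rewrite refl_mxE.
under [RHS]eq_bigr => i _ do rewrite scalerBl -scalerA.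
by rewrite sumrB -scaler_sumr sumI_delta // -Hc.
Qed.

Lemma spanI_word t v : all I t -> spanI v -> spanI (word_mx t *m v).
Proof.
elim: t => [|a t IH] /=; first by rewrite mul1mx.
by case/andP => Ia It Hv; rewrite -mulmxA; apply: spanI_refl => //; apply: IH.
Qed.

Lemma spanI_orth v : spanI v -> dotv v ah = 0.
Proof.
move=> [c ->]; rewrite dotv_suml big1 // => a /andP [_ /eqP H].
by rewrite dotvZl dotvC H mulr0.
Qed.

Lemma Itilde_pos al : I al -> pos_roots_Itilde Phi Delta ah al.
Proof.
move=> Ial; have alD : al \in Delta by case/andP: Ial.
split; first by split; [exact: (Delta_Phi bs alD) | apply/posbP; exact: (pos_simple alD)].
by exists (fun a => (a == al)%:R); rewrite sumI_delta.
Qed.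

Lemma chevalley t : dword Delta t -> reduced Delta t -> word_mx t *m ah = ah -> all I t.
Proof.
elim/last_ind: t => [|t al IH] // tD red H.
move: (tD); rewrite dword_rcons => /andP [tD' aD].
have pl := reduced_last rs bs tD red.
have aP := Delta_Phi bs aD; have anz := root_nz rs aP.
have iu := dword_isom rs bs tD.
have ual : word_mx (rcons t al) *m al = - (word_mx t *m al).
  by rewrite word_rcons -mulmxA (refl_self anz) mulmxN.
have uP : word_mx t *m al \in Phi by exact: (dword_root rs bs tD' aP).
have d0 : dotv al ah = 0.
  apply/eqP; rewrite eq_le (dominant rs bs hr aD) andbT.
  rewrite dotvC -iu H ual dotvC.
  apply: (neg_dot rs bs hr); first exact: Nroot.
  by rewrite (posbN rs bs) // pl.
have rah : refl_mx al *m ah = ah by rewrite refl_mxE /rcoef d0 mulr0 mul0r scale0r subr0.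
rewrite all_rcons; apply/andP; split; first by rewrite /Itilde /= aD dotvC d0 eqxx.
apply: IH => //; first exact: reduced_rcons red.
by rewrite -{1}rah mulmxA -word_rcons.
Qed.

Lemma XI_unique x y : in_XI Phi Delta ah x -> in_XI Phi Delta ah y ->
  x *m ah = y *m ah -> x = y.
Proof.
move=> [[sx [sxP ->]] Xx] [[sy [syP ->]] Xy] H.
set u0 := word_mx (rev sx ++ sy).
have u0P : all (mem Phi) (rev sx ++ sy) by rewrite all_cat all_rev sxP.
have xu : word_mx sx *m u0 = word_mx sy.
  by rewrite /u0 word_cat mulmxA word_rev' ?mul1mx // (allnz rs).
have [t [tD wt]] := W_dword rs bs u0P.
have [t' [t'D red wt']] := reduced_exists tD.
have u0ah : word_mx t' *m ah = ah.
  rewrite wt' wt word_cat -mulmxA -H mulmxA word_rev ?mul1mx //.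
  exact: (allnz rs).
have It' := chevalley t'D red u0ah.
case/lastP: t' t'D red wt' It' {u0ah} => [|t1 al] t'D red wt' It'.
  by rewrite -xu /u0 -wt -wt' /= mulmx1.
exfalso.
move: (t'D); rewrite dword_rcons => /andP [t1D aD].
move: It'; rewrite all_rcons => /andP [Ial It1].
have pl := reduced_last rs bs t'D red.
have gP : word_mx t1 *m al \in Phi by exact: (dword_root rs bs t1D (Delta_Phi bs aD)).
have gI : pos_roots_Itilde Phi Delta ah (word_mx t1 *m al).
  split; first by split => //; apply/posbP.
  by apply: spanI_word => //; have [_] := Itilde_pos Ial.
have [xgP /posbP xg] := Xx _ gI.
have [ygP /posbP yg] := Xy _ (Itilde_pos Ial).
have : word_mx sy *m al = - (word_mx sx *m (word_mx t1 *m al)).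
  rewrite -xu /u0 -wt -wt' word_rcons -!mulmxA refl_self ?(root_nz rs) ?(Delta_Phi bs) //.
  by rewrite !mulmxN.
by move=> E; move: yg; rewrite E (posbN rs bs) // xg.
Qed.

End G.



Lemma count_split (T : Type) (p q : pred T) (s : seq T) :
  count p s = (count (fun x => p x && q x) s + count (fun x => p x && ~~ q x) s)%N.
Proof. by elim: s => [|x s IH] //=; rewrite IH; case: (p x); case: (q x) => /=; lia. Qed.

Section H.
Variables (R : realFieldType) (n : nat) (Phi Delta : seq 'cV[R]_n) (ah : 'cV[R]_n).
Notation vec := 'cV[R]_n.
Implicit Types (u v w a b : vec) (s t : seq vec).
Hypothesis rs : root_system Phi.
Hypothesis bs : is_basis Phi Delta.
Hypothesis hr : highest_root Phi Delta ah.
Notation posb := (posb Delta).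
Notation ninv := (ninv Phi Delta).

Lemma ninv_mul (x : 'M[R]_n) a : isom x -> (forall b, b \in Phi -> x *m b \in Phi) ->
  x *m ah = a -> a \in Phi -> posb a ->
  ninv (refl_mx a *m x) = (ninv (refl_mx a) + ninv x)%N.
Proof.
move=> ix xP xah aP pa.
have ia := isom_refl (root_nz rs aP).
have dotx b : dotv (x *m b) a = dotv b ah by rewrite -xah ix.
rewrite /ninv (count_split _ (fun b => posb (x *m b))).
congr addn.
  rewrite [RHS](count_Phi rs _ ix xP); apply: eq_in_count => b bP /=.
  rewrite -mulmxA; case pxb: (posb (x *m b)); rewrite ?andbF ?andbT //=.
  case nb: (posb (refl_mx a *m (x *m b))); rewrite ?andbF ?andbT //=.
  apply: (dot_pos rs bs hr bP); rewrite -dotx.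
  by apply: (refl_neg_dot rs bs) => //; [exact: xP | rewrite nb].
apply: eq_in_count => b bP /=.
rewrite -mulmxA; case pb: (posb b) => //=.
case pxb: (posb (x *m b)); rewrite /= ?andbF ?andbT //.
apply: contraT; rewrite negbK => H.
have xbP := xP b bP.
have : 0 < dotv (- (x *m b)) a.
  apply: (refl_neg_dot rs bs) => //; first exact: Nroot.
    by rewrite (posbN rs bs) // pxb.
  by rewrite refl_mxN (posbN rs bs) ?H // refl_root.
rewrite -mulmxN dotx => /(dot_pos rs bs hr (Nroot rs bP)).
by rewrite (posbN rs bs) // pb.
Qed.

Lemma main_thm a : pos_root Phi Delta a ->
  forall xm xp : 'M[R]_n,
    is_x Phi Delta ah (- a) xm -> is_x Phi Delta ah a xp ->
    [/\ xm = refl_mx a *m xp,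
        lengthW Delta xm = lengthW Delta (refl_mx a *m xp) &
        lengthW Delta (refl_mx a *m xp) = (lengthW Delta (refl_mx a) + lengthW Delta xp)%N].
Proof.
move=> [aP /posbP pa] xm xp [Xm xmah] [[[sp [spP xpE]] Xp] xpah].
have anz := root_nz rs aP.
have ixp : isom xp by rewrite xpE; exact: (word_isomP rs spP).
have xpP b : b \in Phi -> xp *m b \in Phi by rewrite xpE; exact: (word_root rs spP).
have X' : in_XI Phi Delta ah (refl_mx a *m xp).
  split; first by exists (a :: sp); rewrite /= aP spP xpE.
  move=> g gI; have [gpos gspan] := gI.
  have [xgP xgpos] := Xp g gI.
  have -> : refl_mx a *m xp *m g = xp *m g.
    rewrite -mulmxA refl_mxE /rcoef dotvC -xpah ixp (spanI_orth gspan).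
    by rewrite mulr0 mul0r scale0r subr0.
  by split.
have E : xm = refl_mx a *m xp.
  apply: (XI_unique rs bs hr Xm X').
  by rewrite xmah -mulmxA xpah refl_self.
have [tp [tpD tpE]] := W_dword rs bs spP.
have [ta [taD taE]] := refl_dword rs bs aP.
have [t' [t'D t'E]] : exists t', dword Delta t' /\ word_mx t' = refl_mx a *m xp.
  exists (ta ++ tp); rewrite word_cat taE tpE xpE; split => //.
  by rewrite /dword all_cat; apply/andP.
split => //; first by rewrite E.
rewrite -t'E -taE xpE -tpE !(lengthW_ninv rs bs) // t'E taE tpE -xpE.
by apply: ninv_mul => //; apply/posbP.
Qed.

End H.

Theorem proposition1p7 (R : realFieldType) (n : nat)
    (Phi Delta : seq 'cV[R]_n) (ah : 'cV[R]_n) :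
  root_system Phi -> irreducible_rs Phi -> is_basis Phi Delta ->
  highest_root Phi Delta ah ->
  forall a : 'cV[R]_n, pos_root Phi Delta a -> long_root Phi a ->
  forall xm xp : 'M[R]_n,
    is_x Phi Delta ah (- a) xm -> is_x Phi Delta ah a xp ->
    [/\ xm = refl_mx a *m xp,
        lengthW Delta xm = lengthW Delta (refl_mx a *m xp) &
        lengthW Delta (refl_mx a *m xp) = (lengthW Delta (refl_mx a) + lengthW Delta xp)%N].
Proof.
move=> rs _ bs hr a pa _; exact: main_thm rs bs hr a pa.
Qed.
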